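(* (i) The first-order supertransvectant $J^{\lambda,\mu}_1$, i.e. the bracket $[f,g]=\mu\,f'\,g-\lambda\,f\,g'-(-1)^{\sigma(f)}\,\tfrac{1}{2}\,\overline{D}(f)\,\overline{D}(g)$, corresponds to the Poisson bracket on $\mathbb{R}^{2|1}$: $$F_{[f,g]}=\frac{1}{2}\,\{F_f,F_g\}.$$ (ii) The supertransvectant of order $\tfrac12$, i.e. the odd bracket $(f,g)=\mu\,\overline{D}(f)\,g-(-1)^{\sigma(f)}\,\lambda\,f\,\overline{D}(g)$, corresponds to the ghost Poisson bracket: $$F_{(f,g)}=-\frac{1}{2}\,\{F_f,F_g\}_{\rm gPb}.$$
   Context: The supercircle $S^{1|1}$ has function algebra $C^\infty_{\mathbb{C}}(S^1)[\xi]$ with $\xi$ odd, $\xi^2=0$; functions are $f(x,\xi)=f_0(x)+\xi f_1(x)$, with parity $\sigma(f_0)=0$, $\sigma(\xi f_1)=1$. For $\lambda\in\mathbb{C}$, $\mathcal{F}_\lambda$ denotes this space of functions regarded as $\lambda$-densities (with the $\mathrm{OSp}(1|2)$ fraction-linear action of weight $\lambda$). Let $\overline{D}=\frac{\partial}{\partial\xi}-\xi\frac{\partial}{\partial x}$ and $f'=\partial f/\partial x$. Take $f\in\mathcal{F}_\lambda$, $g\in\mathcal{F}_\mu$. On $\mathbb{R}^{2|1}$ with coordinates $(p,q,\tau)$ ($\tau$ odd), the Poisson bracket is $\{F,G\}=\frac{\partial F}{\partial p}\frac{\partial G}{\partial q}-\frac{\partial F}{\partial q}\frac{\partial G}{\partial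 p}+\frac{\partial F}{\partial \tau}\frac{\partial G}{\partial \tau}$, the Euler field is $\mathcal{E}=p\frac{\partial}{\partial p}+q\frac{\partial}{\partial q}+\tau\frac{\partial}{\partial \tau}$, and the ghost Poisson bracket is $\{F,G\}_{\rm gPb}=\frac{\partial F}{\partial \tau}\,\mathcal{E}(G)-(-1)^{\sigma(F)}\,\mathcal{E}(F)\,\frac{\partial G}{\partial \tau}+\tau\left(\frac{\partial F}{\partial p}\frac{\partial G}{\partial q}-\frac{\partial F}{\partial q}\frac{\partial G}{\partial p}\right)$. The symplectic lifting associates to $f\in\mathcal{F}_\lambda$ the function homogeneous of degree $-2\lambda$ on $\mathbb{R}^{2|1}$ $$F_f(p,q,\tau)=p^{-2\lambda}f\!\left(\tfrac{q}{p},\tfrac{\tau}{p}\right)=p^{-2\lambda}f_0\!\left(\tfrac{q}{p}\right)+\tau\,p^{-2\lambda-1}f_1\!\left(\tfrac{q}{p}\right).$$ Note that $[f,g]\in\mathcal{F}_{\lambda+\mu+1}$ and $(f,g)\in\mathcal{F}_{\lambda+\mu+\frac12}$. *)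

(* Defs.v *)
From Stdlib Require Import Reals.
From Coquelicot Require Import Coquelicot.

Set Implicit Arguments.

Local Open Scope R_scope.

Definition Cderiv (f : R -> C) (x : R) : C :=
  (Derive (fun t => Re (f t)) x, Derive (fun t => Im (f t)) x).

Definition smoothR (g : R -> R) : Prop :=
  forall (n : nat) (x : R), ex_derive (Derive_n g n) x.

Definition smoothC (f : R -> C) : Prop :=
  smoothR (fun t => Re (f t)) /\ smoothR (fun t => Im (f t)).

(** Complex power [p ^ z := exp (z ln p)] of a positive real [p]. *)
Definition cpow (p : R) (z : C) : C :=
  (exp (Re z * ln p) * cos (Im z * ln p), exp (Re z * ln p) * sin (Im z * ln p)).

Local Open Scope C_scope.

(** * Superfunctions on the supercircle S^{1|1}:
      f(x, xi) = f0(x) + xi f1(x), represented by the pair (f0, f1). *)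
Record sfun := SFun { sf0 : R -> C ; sf1 : R -> C }.

Definition sfun_smooth (f : sfun) : Prop := smoothC (sf0 f) /\ smoothC (sf1 f).

(** Homogeneity of parity [s] (false = even, true = odd):
    even means f = f0, odd means f = xi f1. *)
Definition homogeneous (s : bool) (f : sfun) : Prop :=
  if s then (forall x, sf0 f x = 0) else (forall x, sf1 f x = 0).

Definition sgn (s : bool) : C := if s then -1 else 1.

Definition sf_add (f g : sfun) : sfun :=
  SFun (fun x => sf0 f x + sf0 g x) (fun x => sf1 f x + sf1 g x).
Definition sf_scal (c : C) (f : sfun) : sfun :=
  SFun (fun x => c * sf0 f x) (fun x => c * sf1 f x).
(** (a0 + xi a1)(b0 + xi b1) = a0 b0 + xi (a1 b0 + a0 b1) *)
Definition sf_mul (f g : sfun) : sfun :=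
  SFun (fun x => sf0 f x * sf0 g x)
       (fun x => sf1 f x * sf0 g x + sf0 f x * sf1 g x).

Definition sf_dx (f : sfun) : sfun := SFun (Cderiv (sf0 f)) (Cderiv (sf1 f)).

(** Dbar = d/dxi - xi d/dx : Dbar(f0 + xi f1) = f1 - xi f0' *)
Definition Dbar (f : sfun) : sfun :=
  SFun (sf1 f) (fun x => - Cderiv (sf0 f) x).

Definition sbracket (lam mu : C) (s : bool) (f g : sfun) : sfun :=
  sf_add (sf_add (sf_scal mu (sf_mul (sf_dx f) g))
                 (sf_scal (- lam) (sf_mul f (sf_dx g))))
         (sf_scal (- (sgn s * / 2)) (sf_mul (Dbar f) (Dbar g))).

Definition sodd_bracket (lam mu : C) (s : bool) (f g : sfun) : sfun :=
  sf_add (sf_scal mu (sf_mul (Dbar f) g))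
         (sf_scal (- (sgn s * lam)) (sf_mul f (Dbar g))).

(** * Superfunctions on R^{2|1}:
      F(p,q,tau) = F0(p,q) + tau F1(p,q), represented by (F0, F1). *)
Record sfun2 := SFun2 { sg0 : R -> R -> C ; sg1 : R -> R -> C }.

Definition s2_add (F G : sfun2) : sfun2 :=
  SFun2 (fun p q => sg0 F p q + sg0 G p q) (fun p q => sg1 F p q + sg1 G p q).
Definition s2_sub (F G : sfun2) : sfun2 :=
  SFun2 (fun p q => sg0 F p q - sg0 G p q) (fun p q => sg1 F p q - sg1 G p q).
Definition s2_scal (c : C) (F : sfun2) : sfun2 :=
  SFun2 (fun p q => c * sg0 F p q) (fun p q => c * sg1 F p q).
Definition s2_mul (F G : sfun2) : sfun2 :=
  SFun2 (fun p q => sg0 F p q * sg0 G p q)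
        (fun p q => sg1 F p q * sg0 G p q + sg0 F p q * sg1 G p q).

Definition s2_dp (F : sfun2) : sfun2 :=
  SFun2 (fun p q => Cderiv (fun p' => sg0 F p' q) p)
        (fun p q => Cderiv (fun p' => sg1 F p' q) p).
Definition s2_dq (F : sfun2) : sfun2 :=
  SFun2 (fun p q => Cderiv (fun q' => sg0 F p q') q)
        (fun p q => Cderiv (fun q' => sg1 F p q') q).
Definition s2_dtau (F : sfun2) : sfun2 := SFun2 (sg1 F) (fun _ _ => 0).

Definition s2_tau (F : sfun2) : sfun2 := SFun2 (fun _ _ => 0) (sg0 F).

Definition euler (F : sfun2) : sfun2 :=
  s2_add (s2_add (s2_mul (SFun2 (fun p _ => RtoC p) (fun _ _ => 0)) (s2_dp F))
                 (s2_mul (SFun2 (fun _ q => RtoC q) (fun _ _ => 0)) (s2_dq F)))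
         (s2_tau (s2_dtau F)).

Definition poisson (F G : sfun2) : sfun2 :=
  s2_add (s2_sub (s2_mul (s2_dp F) (s2_dq G)) (s2_mul (s2_dq F) (s2_dp G)))
         (s2_mul (s2_dtau F) (s2_dtau G)).

Definition ghost_poisson (s : bool) (F G : sfun2) : sfun2 :=
  s2_add (s2_sub (s2_mul (s2_dtau F) (euler G))
                 (s2_scal (sgn s) (s2_mul (euler F) (s2_dtau G))))
         (s2_tau (s2_sub (s2_mul (s2_dp F) (s2_dq G)) (s2_mul (s2_dq F) (s2_dp G)))).

(** Symplectic lifting of f in F_lambda:
    F_f(p,q,tau) = p^{-2 lambda} f0(q/p) + tau p^{-2 lambda - 1} f1(q/p)
    (defined for p > 0). *)
Definition lift (lam : C) (f : sfun) : sfun2 :=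
  SFun2 (fun p q => cpow p (- (2 * lam)) * sf0 f (q / p)%R)
        (fun p q => cpow p (- (2 * lam) - 1) * sf1 f (q / p)%R).

Definition s2_eq_on_pos (F G : sfun2) : Prop :=
  forall p q : R, (0 < p)%R -> sg0 F p q = sg0 G p q /\ sg1 F p q = sg1 G p q.

(* Main.v *)
Require Import Defs.
From Stdlib Require Import Reals Lra.
From Coquelicot Require Import Coquelicot.


Local Open Scope R_scope.

Lemma is_derive_Rmult (f g : R -> R) x df dg : is_derive f x df -> is_derive g x dg ->
  is_derive (fun t => f t * g t) x (df * g x + f x * dg).
Proof. intros. apply (is_derive_mult f g x df dg); auto. intros; apply Rmult_comm. Qed.

Lemma is_derive_Rminus (f g : R -> R) x df dg : is_derive f x df -> is_derive g x dg ->
  is_derive (fun t => f t - g t) x (df - dg).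
Proof. intros. apply (is_derive_minus f g x df dg); auto. Qed.

Lemma is_derive_Rplus (f g : R -> R) x df dg : is_derive f x df -> is_derive g x dg ->
  is_derive (fun t => f t + g t) x (df + dg).
Proof. intros. apply (is_derive_plus f g x df dg); auto. Qed.

Lemma is_derive_Rcomp (f g : R -> R) x df dg : is_derive f (g x) df -> is_derive g x dg ->
  is_derive (fun t => f (g t)) x (dg * df).
Proof. intros. apply (is_derive_comp f g x df dg); auto. Qed.

Lemma is_derive_eq' (f : R -> R) x l l' : is_derive f x l' -> l' = l -> is_derive f x l.
Proof. intros; subst; auto. Qed.

Definition is_Cd (h : R -> C) (x : R) (d : C) :=
  is_derive (fun t => Re (h t)) x (Re d) /\ is_derive (fun t => Im (h t)) x (Im d).

Lemma Cderiv_eq h x d : is_Cd h x d -> Cderiv h x = d.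
Proof.
  intros [H1 H2]. unfold Cderiv.
  assert (E1 : Derive (fun t => Re (h t)) x = Re d) by (apply is_derive_unique; exact H1).
  assert (E2 : Derive (fun t => Im (h t)) x = Im d) by (apply is_derive_unique; exact H2).
  rewrite E1, E2. destruct d; reflexivity.
Qed.

Lemma is_Cd_mult h k x dh dk : is_Cd h x dh -> is_Cd k x dk ->
  is_Cd (fun t => (h t * k t)%C) x (dh * k x + h x * dk)%C.
Proof.
  intros [H1 H2] [K1 K2]. split.
  - eapply is_derive_eq'.
    + apply (is_derive_Rminus (fun t => Re (h t) * Re (k t)) (fun t => Im (h t) * Im (k t)));
      apply is_derive_Rmult; eauto.
    + destruct dh, dk, (h x), (k x); simpl; ring.
  - eapply is_derive_eq'.
    + apply (is_derive_Rplus (fun t => Re (h t) * Im (k t)) (fun t => Im (h t) * Re (k t)));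
      apply is_derive_Rmult; eauto.
    + destruct dh, dk, (h x), (k x); simpl; ring.
Qed.

Lemma is_Cd_comp h u x dh du : is_Cd h (u x) dh -> is_derive u x du ->
  is_Cd (fun t => h (u t)) x (dh * RtoC du)%C.
Proof.
  intros [H1 H2] U. split.
  - eapply is_derive_eq'. apply (is_derive_Rcomp (fun t => Re (h t))); eauto.
    destruct dh; simpl; ring.
  - eapply is_derive_eq'. apply (is_derive_Rcomp (fun t => Im (h t))); eauto.
    destruct dh; simpl; ring.
Qed.

Lemma is_Cd_const_mul c h x dh : is_Cd h x dh -> is_Cd (fun t => (c * h t)%C) x (c * dh)%C.
Proof.
  intros. eapply is_Cd_mult with (h := fun _ => c) (dh := RtoC 0) in H.
  - replace (c * dh)%C with (0 * h x + c * dh)%C by ring. exact H.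
  - split; simpl; (eapply is_derive_eq'; [apply is_derive_const|reflexivity]).
Qed.

Lemma is_Cd_cpow z p : 0 < p -> is_Cd (fun t => cpow t z) p (z * cpow p z / RtoC p)%C.
Proof.
  intros Hp. destruct z as [a b]. unfold cpow; split; unfold Cdiv, Cmult, Cinv; simpl.
  - auto_derive. auto. field. lra.
  - auto_derive. auto. field. lra.
Qed.

Local Open Scope C_scope.

Definition Cdiff (h : R -> C) x := is_Cd h x (Cderiv h x).

Lemma smooth_Cdiff h x : smoothC h -> Cdiff h x.
Proof.
  intros [H1 H2]. specialize (H1 O x). specialize (H2 O x). simpl in H1, H2.
  split; simpl; apply Derive_correct; auto.
Qed.

Lemma RtoC_neq0 (p : R) : (0 < p)%R -> RtoC p <> 0.
Proof. intros Hp E. apply RtoC_inj in E. lra. Qed.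

Lemma lift_dp z h p q : (0 < p)%R -> Cdiff h (q / p)%R ->
  Cderiv (fun p' => cpow p' z * h (q / p')%R) p
  = cpow p z * (z * h (q / p)%R - RtoC q / RtoC p * Cderiv h (q / p)%R) / RtoC p.
Proof.
  intros Hp Hh. apply Cderiv_eq.
  assert (Hu : is_derive (fun p' => q / p')%R p (- q / (p * p))%R).
  { auto_derive. lra. field. lra. }
  pose proof (is_Cd_comp h (fun p' => q / p')%R p _ _ Hh Hu) as Hc.
  pose proof (is_Cd_mult _ _ _ _ _ (is_Cd_cpow z p Hp) Hc) as Hm.
  replace (cpow p z * (z * h (q / p)%R - RtoC q / RtoC p * Cderiv h (q / p)%R) / RtoC p)
    with (z * cpow p z / RtoC p * h (q / p)%R + cpow p z * (Cderiv h (q / p)%R * RtoC (- q / (p * p))%R)).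
  exact Hm.
  rewrite RtoC_div, RtoC_mult, RtoC_opp. field. apply RtoC_neq0; auto.
  apply Rgt_not_eq, Rmult_lt_0_compat; auto.
Qed.

Lemma lift_dq z h p q : (0 < p)%R -> Cdiff h (q / p)%R ->
  Cderiv (fun q' => cpow p z * h (q' / p)%R) q
  = cpow p z * Cderiv h (q / p)%R / RtoC p.
Proof.
  intros Hp Hh. apply Cderiv_eq.
  assert (Hu : is_derive (fun q' => q' / p)%R q (/ p)%R).
  { auto_derive. lra. field. lra. }
  pose proof (is_Cd_const_mul (cpow p z) _ _ _ (is_Cd_comp h (fun q' => q' / p)%R q _ _ Hh Hu)) as Hm.
  replace (cpow p z * Cderiv h (q / p)%R / RtoC p) with (cpow p z * (Cderiv h (q / p)%R * RtoC (/ p)%R)).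
  exact Hm.
  rewrite RtoC_inv. field. apply RtoC_neq0; auto. lra.
Qed.

Lemma Cderiv_zero (h : R -> C) y : (forall x, h x = RtoC 0) -> Cderiv h y = RtoC 0.
Proof.
  intros H. apply Cderiv_eq. split; simpl.
  - apply (is_derive_ext (fun _ => 0%R)). intro t; cbv beta; rewrite H; reflexivity.
    eapply is_derive_eq'; [apply is_derive_const|reflexivity].
  - apply (is_derive_ext (fun _ => 0%R)). intro t; cbv beta; rewrite H; reflexivity.
    eapply is_derive_eq'; [apply is_derive_const|reflexivity].
Qed.

Lemma cpow_add p z w : cpow p (z + w) = cpow p z * cpow p w.
Proof.
  destruct z as [a b], w as [c d]. unfold cpow, Cmult; simpl.
  replace ((a + c) * ln p)%R with (a * ln p + c * ln p)%R by ring.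
  replace ((b + d) * ln p)%R with (b * ln p + d * ln p)%R by ring.
  rewrite exp_plus, cos_plus, sin_plus. f_equal; ring.
Qed.

Lemma cpow_m1 p : (0 < p)%R -> cpow p (Copp (RtoC 1)) = / RtoC p.
Proof.
  intros Hp. unfold cpow, Cinv; simpl.
  replace (- (1) * ln p)%R with (- ln p)%R by ring.
  replace ((- 0) * ln p)%R with 0%R by ring.
  rewrite exp_Ropp, exp_ln, cos_0, sin_0 by auto. f_equal; field; lra.
Qed.

Lemma cpow_sub1 p z : (0 < p)%R -> cpow p (z - 1) = cpow p z / RtoC p.
Proof. intros Hp. unfold Cminus. rewrite cpow_add, cpow_m1; auto. Qed.

Local Open Scope C_scope.
Lemma cpowE1 p lam mu : (0 < p)%R ->
  cpow p (- (2 * (lam + mu + 1))) = cpow p (- (2 * lam)) * cpow p (- (2 * mu)) / RtoC p / RtoC p.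
Proof.
  intros Hp. replace (- (2 * (lam + mu + 1))) with (- (2 * lam) + - (2 * mu) - 1 - 1) by ring.
  rewrite !cpow_sub1, cpow_add by auto. reflexivity.
Qed.

Lemma cpowE2 p lam mu : (0 < p)%R ->
  cpow p (- (2 * (lam + mu + / 2))) = cpow p (- (2 * lam)) * cpow p (- (2 * mu)) / RtoC p.
Proof.
  intros Hp. replace (- (2 * (lam + mu + / 2))) with (- (2 * lam) + - (2 * mu) - 1).
  rewrite !cpow_sub1, cpow_add by auto. reflexivity.
  field.
Qed.

Lemma C2_neq0 : RtoC 2 <> 0.
Proof. intro E. apply RtoC_inj in E. lra. Qed.


Theorem proposition3p1 :
  forall (lam mu : C) (s : bool) (f g : sfun),
    sfun_smooth f -> sfun_smooth g ->
    homogeneous s f ->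
    (* (i) F_{[f,g]} = 1/2 {F_f, F_g} *)
    s2_eq_on_pos (lift (lam + mu + 1) (sbracket lam mu s f g))
                 (s2_scal (/ 2) (poisson (lift lam f) (lift mu g)))
    /\
    (* (ii) F_{(f,g)} = -1/2 {F_f, F_g}_gPb *)
    s2_eq_on_pos (lift (lam + mu + / 2) (sodd_bracket lam mu s f g))
                 (s2_scal (- / 2) (ghost_poisson s (lift lam f) (lift mu g))).
Proof.
  intros lam mu s f g [Sf0 Sf1] [Sg0 Sg1] Hom; split; intros p q Hp;
  unfold lift, sbracket, sodd_bracket, poisson, ghost_poisson, euler, s2_add, s2_sub, s2_scal, s2_mul,
    s2_dp, s2_dq, s2_dtau, s2_tau, sf_add, sf_scal, sf_mul, sf_dx, Dbar;
  cbn [sg0 sg1 sf0 sf1];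
  rewrite !lift_dp, !lift_dq by (auto; apply smooth_Cdiff; auto);
  rewrite ?cpow_sub1, ?cpowE1, ?cpowE2 by auto;
  pose proof (RtoC_neq0 p Hp) as Hp';
  generalize (cpow p (- (2 * lam))) (cpow p (- (2 * mu))); intros A B;
  (destruct s; simpl in Hom |- *;
  [ rewrite (Cderiv_zero (sf0 f)) by auto; rewrite !Hom
  | rewrite (Cderiv_zero (sf1 f)) by auto; rewrite !Hom ]);
  split; field; auto.
Qed.
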